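(* There exists an absolute constant $C_1<1$ such that the following holds. Let $p$ be a prime, let $n\geq 2$ with $p>2n$, and let $A=\{v_1,\dots,v_n\}$ be a set of $n$ distinct elements of $\mathbb{Z}_p$ which is symmetric, i.e. $-v\in A$ whenever $v\in A$. Let $Y_1,Y_2,Y_3$ be independent random variables, each uniformly distributed on $A$, and set $Y=Y_1+Y_2+Y_3$ (sum in $\mathbb{Z}_p$). Then $$\max_{x\in \mathbb{Z}_p} \mathbb{P}[Y=x]\leq\frac{C_1}{n}.$$
   Context: $\mathbb{Z}_p$ denotes the cyclic group of integers modulo the prime $p$. *)

(* Defs.v *)
From HB Require Import structures.
From mathcomp Require Import all_boot all_order all_algebra.
Set Implicit Arguments. Unset Strict Implicit. Unset Printing Implicit Defensive.
Import Order.TTheory GRing.Theory Num.Theory.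
Local Open Scope ring_scope.

(* Z_p for a prime p is represented by 'Z_p (valid since p >= 2). *)

Definition prob_sum3_uniform (p : nat) (A : {set 'Z_p}) (x : 'Z_p) : rat :=
  \sum_(a in A) \sum_(b in A) \sum_(c in A)
     (if a + b + c == x then (#|A|%:R)^-1 * (#|A|%:R)^-1 * (#|A|%:R)^-1
      else 0).

(* Main.v *)
Require Import Defs.
From HB Require Import structures.
From mathcomp Require Import all_boot all_order all_algebra ring zify lra.
Import Order.TTheory GRing.Theory Num.Theory.
Local Open Scope ring_scope.

Definition sumset p (A B : {set 'Z_p}) := [set a + b | a in A, b in B].
Arguments sumset {p}.

Lemma card_Zp_full p : prime p -> #|[set: 'Z_p]| = p.
Proof. by move=> pp; rewrite cardsT card_ord Zp_cast // prime_gt1. Qed.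

Lemma natZ p (x : 'Z_p) : (nat_of_ord x)%:R = x.
Proof. exact: natr_Zp. Qed.
Arguments natZ {p}.

Lemma closure_full p (A : {set 'Z_p}) (d : 'Z_p) : prime p -> d != 0 -> A != set0 ->
  (forall a, a \in A -> a + d \in A) -> forall y, y \in A.
Proof.
move=> pp dn0 /set0Pn [a0 a0A] cl y.
have it: forall k, a0 + d *+ k \in A.
  by elim=> [|k IH]; [rewrite mulr0n addr0 | rewrite mulrSr addrA cl].
have du : d \is a GRing.unit.
  have := unitZpE (nat_of_ord d) (prime_gt1 pp); rewrite natZ => ->.
  rewrite prime_coprime //.
  apply/negP => /dvdn_leq.
  have dpos : (0 < d)%N by rewrite lt0n; apply: contra dn0 => /eqP h; apply/eqP/val_inj.
  have dlt : (nat_of_ord d < p)%N.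
    by case: (d) => m hm /=; rewrite -[X in (_ < X)%N](Zp_cast (prime_gt1 pp)).
  by move=> /(_ dpos) h2; have := leq_ltn_trans h2 dlt; rewrite ltnn.
have -> : y = a0 + d *+ nat_of_ord (d^-1 * (y - a0) : 'Z_p).
  by rewrite -(mulr_natr d) natZ mulrA mulrV // mul1r addrC subrK.
exact: it.
Qed.

Lemma addr_inj p (e : 'Z_p) : injective (fun b : 'Z_p => b + e).
Proof. by move=> a b /= h; rewrite -(addrK e a) h addrK. Qed.

Lemma CD p (A B : {set 'Z_p}) : prime p -> A != set0 -> B != set0 ->
  (#|A| + #|B| <= #|sumset A B| + 1)%N \/ sumset A B = setT.
Proof.
move=> pp; move: {2}#|B|.+1 (ltnSn #|B|) => k.
elim: k A B => [//|k IH] A B Bk An0 Bn0.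
case: (boolP (sumset A B == setT)) => [/eqP -> | nT]; first by right.
left.
case: (leqP #|B| 1) => B1.
  have /set0Pn [b bB] := Bn0.
  have sub : [set a + b | a in A] \subset sumset A B.
    apply/subsetP => z /imsetP [a aA ->]; exact: imset2_f.
  have := subset_leq_card sub; rewrite card_imset; last exact: addr_inj.
  move=> h; apply: leq_add => //.
have [e [He1 He2]] : exists e, [set b in B | b + e \in A] != set0 /\ [set b in B | b + e \in A] != B.
  case: (pickP (fun e => ([set b in B | b + e \in A] != set0) && ([set b in B | b + e \in A] != B))).
    by move=> e /andP [h1 h2]; exists e.
  move=> none; exfalso.
  have [b1 [b2 [b1B b2B b12]]] := card_gt1P B1.
  have cl : forall a, a \in A -> a + (b2 - b1) \in A.
    move=> a aA; have := negbT (none (a - b1)); rewrite negb_and !negbK => /orP [/eqP h0 | /eqP hB].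
      have : b1 \in [set b in B | b + (a - b1) \in A] by rewrite inE b1B addrC subrK.
      by rewrite h0 inE.
    have : b2 \in [set b in B | b + (a - b1) \in A] by rewrite hB.
    rewrite inE => /andP [_]; congr (_ \in A).
    by rewrite addrCA.
  have full := @closure_full p A (b2 - b1) pp _ An0 cl.
  move/negP: nT; apply; apply/eqP/setP => y; rewrite inE.
  have -> : y = (y - b1) + b1 by rewrite subrK.
  apply: imset2_f => //; apply: full.
  by rewrite subr_eq0 eq_sym.
set B' := [set b in B | b + e \in A].
set X := [set b + e | b in B].
set A' := A :|: X.
have B'sub : B' \subset B by apply/subsetP => b; rewrite inE => /andP [].
have B'lt : (#|B'| < #|B|)%N by apply: proper_card; rewrite properEneq He2 B'sub.
have A'n0 : A' != set0.
  by have /set0Pn [a aA] := An0; apply/set0Pn; exists a; rewrite inE aA.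
have AX : A :&: X = [set b + e | b in B'].
  apply/setP => z; apply/idP/idP.
    rewrite inE => /andP [zA /imsetP [b bB zeq]].
    by apply/imsetP; exists b => //; rewrite inE bB -zeq.
  move=> /imsetP [b]; rewrite inE => /andP [bB beA] ->.
  by rewrite inE beA; apply: imset_f.
have cardeq : (#|A'| + #|B'| = #|A| + #|B|)%N.
  have := cardsUI A X; rewrite AX !card_imset; try exact: addr_inj.
  by [].
have sub : sumset A' B' \subset sumset A B.
  apply/subsetP => z /imset2P [a' b' Ha' Hb' ->].
  move: Hb'; rewrite inE => /andP [b'B b'eA].
  move: Ha'; rewrite inE => /orP [a'A | /imsetP [b bB ->]].
    exact: imset2_f.
  have -> : b + e + b' = (b' + e) + b by rewrite addrC [b + e]addrC addrA.
  exact: imset2_f.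
have := IH A' B' (leq_trans B'lt Bk) A'n0 He1.
case.
  + move=> h; rewrite -cardeq; apply: (leq_trans h); rewrite leq_add2r.
    exact: subset_leq_card.
  + move=> hT; exfalso; move/negP: nT; apply; apply/eqP/setP => z; rewrite inE.
    by apply: (subsetP sub); rewrite hT inE.
Qed.
Lemma card_sub_sum (T : finType) (A : {set T}) (P : pred T) :
  #|[set a in A | P a]| = (\sum_(a in A) (P a : nat))%N.
Proof.
rewrite -sum1_card big_mkcond /= [RHS]big_mkcond /=; apply: eq_bigr => a _.
by rewrite inE; case: (a \in A); case: (P a).
Qed.

Lemma sum_bool_card (T : finType) (P : pred T) :
  (\sum_(u : T) (P u : nat))%N = #|[set u | P u]|.
Proof.
rewrite -sum1dep_card [RHS]big_mkcond /=; apply: eq_bigr => u _.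
by case: (P u).
Qed.

Section Energy.
Variable p : nat.
Variable A : {set 'Z_p}.

Definition Ec (u : 'Z_p) := #|[set a in A | a - u \in A]|.

Lemma subr_inj (u : 'Z_p) : injective (fun a : 'Z_p => a - u).
Proof. by move=> a b /= h; rewrite -(subrK u a) h subrK. Qed.

Lemma Ec_le u : (Ec u <= #|A|)%N.
Proof. by apply: subset_leq_card; apply/subsetP => a; rewrite inE => /andP []. Qed.

Lemma Ec0 : Ec 0 = #|A|.
Proof. by rewrite /Ec (_ : [set a in A | a - 0 \in A] = A) //; apply/setP => a; rewrite inE subr0 andbb. Qed.

Lemma Ec_add u v : (Ec u + Ec v <= Ec (u + v)%R + #|A|)%N.
Proof.
set X := [set a in A | a - u \in A].
set Y := (fun a => a - u) @^-1: [set c in A | c - v \in A].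
set Z := (fun a => a - u) @^-1: A.
have cY : #|Y| = Ec v by rewrite card_preimset //; exact: subr_inj.
have cZ : #|Z| = #|A| by rewrite card_preimset //; exact: subr_inj.
have XZ : X :|: Y \subset Z.
  by rewrite subUset; apply/andP; split; apply/subsetP => a; rewrite !inE => /andP [].
have XY : X :&: Y \subset [set a in A | a - (u + v) \in A].
  apply/subsetP => a; rewrite !inE => /andP [/andP [aA _] /andP [_ h]].
  by rewrite aA; have -> : a - (u + v) = a - u - v by ring.
have := cardsUI X Y; rewrite cY -/(Ec u).
have := subset_leq_card XZ; have := subset_leq_card XY; rewrite cZ -/(Ec (u + v)).
move=> h1 h2 h3; rewrite -h3 addnC leq_add //.
Qed.

Lemma sumEc : (\sum_u Ec u = #|A| * #|A|)%N.
Proof.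
rewrite /Ec; under eq_bigr => u _ do rewrite card_sub_sum.
rewrite exchange_big /= -sum_nat_const; apply: eq_bigr => a _.
rewrite sum_bool_card.
have -> : [set u | a - u \in A] = (fun u => a - u) @^-1: A by apply/setP => u; rewrite !inE.
rewrite card_preimset // => u w /= h.
by apply: oppr_inj; apply: (addrI a).
Qed.

Variable x : 'Z_p.
Definition gc (a : 'Z_p) := #|[set b in A | x - a - b \in A]|.

Lemma g_pair a a' : (gc a + gc a' <= Ec (a' - a)%R + #|A|)%N.
Proof.
set G := [set b in A | x - a - b \in A].
set G' := [set b in A | x - a' - b \in A].
have inj : injective (fun b => x - a - b).
  by move=> b c /= h; apply: oppr_inj; apply: (addrI (x - a)).
have h1 : G :&: G' \subset (fun b => x - a - b) @^-1: [set c in A | c - (a' - a) \in A].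
  apply/subsetP => b; rewrite !inE => /andP [/andP [_ h] /andP [_ h']].
  by rewrite h; have -> : x - a - b - (a' - a) = x - a' - b by ring.
have h2 : G :|: G' \subset A.
  by rewrite subUset; apply/andP; split; apply/subsetP => b; rewrite inE => /andP [].
have := subset_leq_card h1; rewrite card_preimset // -/(Ec (a' - a)) => c1.
have := subset_leq_card h2 => c2.
have := cardsUI G G'; rewrite -/(gc a) -/(gc a') => <-.
by rewrite addnC leq_add.
Qed.

End Energy.
Arguments Ec {p}.
Arguments gc {p}.
Arguments Ec_add {p}. Arguments Ec_le {p}. Arguments Ec0 {p}. Arguments sumEc {p}. Arguments g_pair {p}. Arguments subr_inj {p}.

Lemma count_bound p (A : {set 'Z_p}) x n : prime p -> (2 <= n)%N -> (2 * n < p)%N -> #|A| = n ->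
  (192 * \sum_(a in A) gc A x a <= 191 * (n * n))%N.
Proof.
move=> pp n2 np cA.
set V := [set u | (7 * n <= 8 * Ec A u)%N].
set W := [set u | (3 * n <= 4 * Ec A u)%N].
have n0 : (0 < n)%N by lia.
have VW : sumset V V \subset W.
  apply/subsetP => z /imset2P [u v]; rewrite !inE => hu hv ->.
  have := Ec_add A u v; rewrite cA => h.
  set t := Ec A _. have h2 : (Ec A u + Ec A v <= t + n)%N by exact: h. lia.
have W3 : (3 * #|W| <= 4 * n)%N.
  have e := sumEc A; rewrite cA in e.
  have h2 : (#|W| * (3 * n) <= 4 * (n * n))%N.
    apply: (@leq_trans (\sum_(u in W) 4 * Ec A u)).
      by rewrite -sum_nat_const; apply: leq_sum => u; rewrite inE.
    rewrite -big_distrr /= -e leq_mul2l /=.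
    by rewrite [X in (_ <= X)%N](bigID (mem W)) /= leq_addr.
  have h3 : (3 * #|W| * n <= 4 * n * n)%N by nia.
  by rewrite leq_pmul2r in h3.
have V0 : V != set0 by apply/set0Pn; exists 0; rewrite inE Ec0 cA; lia.
have V6 : (6 * #|V| <= 4 * n + 3)%N.
  have := subset_leq_card VW.
  have [h|h] := @CD p V V pp V0 V0.
    move=> hs; move: h hs W3; set s := #|sumset V V|; set cv := #|V|; set cw := #|W|; clearbody s cv cw => h hs W3; lia.
  rewrite h card_Zp_full // => hs; move: W3 hs; set cw := #|W|; clearbody cw => W3 hs; lia.
have T1 : forall a : 'Z_p, (\sum_(a' in A) ((a' - a)%R \in V : nat) <= #|V|)%N.
  move=> a; rewrite -card_sub_sum.
  apply: (@leq_trans #|(fun a' => a' - a) @^-1: V|).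
    by apply: subset_leq_card; apply/subsetP => b; rewrite !inE => /andP [].
  by rewrite card_preimset //; exact: subr_inj.
have T2 : forall u, (8 * Ec A u <= 7 * n + n * (u \in V))%N.
  move=> u; have := Ec_le A u; rewrite cA; case: (boolP (u \in V)); rewrite inE => h; lia.
have T3 : forall a : 'Z_p, (8 * \sum_(a' in A) Ec A (a' - a)%R <= 7*n*n + n * #|V|)%N.
  move=> a; rewrite big_distrr /=.
  apply: (@leq_trans (\sum_(a' in A) (7 * n + n * ((a' - a)%R \in V))))%N.
    by apply: leq_sum => a' _; exact: T2.
  rewrite big_split /= sum_nat_const cA -big_distrr /=.
  apply: leq_add; first by rewrite mulnC.
  exact: leq_mul (leqnn n) (T1 a).
have S1b : (8 * \sum_(a in A) \sum_(a' in A) Ec A (a' - a)%R <= 7 * n * n * n + n * (n * #|V|))%N.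
  rewrite big_distrr /=.
  apply: (@leq_trans (\sum_(a in A) (7*n*n + n * #|V|)))%N.
    by apply: leq_sum => a _; exact: T3.
  rewrite sum_nat_const cA mulnDr; apply: leq_add; first by rewrite mulnC.
  exact: leqnn.
set N := \sum_(a in A) gc A x a.
have S2 : (2 * n * N <= \sum_(a in A) \sum_(a' in A) Ec A (a' - a)%R + n * n * n)%N.
  have : (\sum_(a in A) \sum_(a' in A) (gc A x a + gc A x a') <= \sum_(a in A) \sum_(a' in A) (Ec A (a' - a)%R + n))%N.
    apply: leq_sum => a _; apply: leq_sum => a' _; rewrite -cA; exact: g_pair.
  under eq_bigr => a _ do rewrite big_split /= sum_nat_const cA.
  under [X in (_ <= X)%N]eq_bigr => a _ do rewrite big_split /= sum_nat_const cA.
  rewrite big_split /= sum_nat_const cA -big_distrr /= big_split /= sum_nat_const cA -/N.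
  nia.
have S3 : (n * (96 * N) <= n * (94 * n * n + 3 * n))%N by nia.
rewrite leq_pmul2l // in S3.
nia.
Qed.

Lemma inner_sum p (A : {set 'Z_p}) (a b x : 'Z_p) (k : rat) :
  \sum_(c in A) (if a + b + c == x then k else 0) = k *+ (x - a - b \in A).
Proof.
case: (boolP (x - a - b \in A)) => h.
  rewrite (bigD1 (x - a - b)) //= big1 ?addr0.
    by rewrite (_ : a + b + (x - a - b) == x) //; apply/eqP; ring.
  move=> c /andP [_ hc]; case: eqP => // e; exfalso; move/negP: hc; apply.
  by apply/eqP; rewrite -e; ring.
rewrite big1 // => c cA; case: eqP => // e; exfalso; move/negP: h; apply.
by rewrite (_ : x - a - b = c) //; rewrite -e; ring.
Qed.

Lemma prob_eq p (A : {set 'Z_p}) x :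
  prob_sum3_uniform A x =
   ((#|A|%:R)^-1 * (#|A|%:R)^-1 * (#|A|%:R)^-1) *+ (\sum_(a in A) gc A x a)%N.
Proof.
rewrite /prob_sum3_uniform -sumrMnr; apply: eq_bigr => a _.
rewrite /gc card_sub_sum -sumrMnr; apply: eq_bigr => b _.
exact: inner_sum.
Qed.


Lemma fin_ineq (N m c d : rat) : 0 < d -> 0 < m -> d * N <= c * m ^+ 2 ->
  m^-1 * m^-1 * m^-1 * N <= c / d / m.
Proof.
move=> hd hm h.
have -> : m^-1 * m^-1 * m^-1 * N = N / m ^+ 3.
  by rewrite !exprS expr0 mulr1 !invfM; ring.
have h3 : 0 < m ^+ 3 by exact: exprn_gt0.
rewrite (ler_pdivrMr _ _ h3).
have mn0 : m != 0 by rewrite gt_eqF.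
have -> : c / d / m * m ^+ 3 = c * m ^+ 2 / d.
  by rewrite !exprS expr0 mulr1; field; rewrite mn0 gt_eqF.
by rewrite (ler_pdivlMr _ _ hd) mulrC.
Qed.

Theorem lemma3p1 :
  exists C1 : rat, C1 < 1 /\
    forall (p n : nat) (A : {set 'Z_p}),
      prime p -> (2 <= n)%N -> (2 * n < p)%N -> #|A| = n ->
      (forall v : 'Z_p, v \in A -> - v \in A) ->
      forall x : 'Z_p, prob_sum3_uniform A x <= C1 / n%:R.
Proof.
have h192 : (0 : rat) < 192 := ltr0Sn rat 191.
exists (191 / 192); split; first by lra.
move=> p n A pp n2 np cA _ x.
have h := @count_bound p A x n pp n2 np cA.
rewrite prob_eq cA -mulr_natr.
have hm : (0 : rat) < n%:R by rewrite ltr0n; lia.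
have hN : (192 : rat) * (\sum_(a in A) gc A x a)%N%:R <= 191 * n%:R ^+ 2.
  by rewrite -natrX -!natrM ler_nat -mulnn.
have H := @fin_ineq (\sum_(a in A) gc A x a)%N%:R n%:R 191 192 h192 hm hN.
exact: H.
Qed.
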